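(* Let $S$ be a semibounded relation in $\mathfrak H$ with lower bound $\gamma\in\mathbb R$, let $c\le\gamma$, and let $Q_c$ (into $\mathfrak K_c$) be a representing map for $\mathfrak t(S)-c$ with companion relation $J_c$. For a relation $H$ in $\mathfrak H$ the following are equivalent: (i) $H$ is a selfadjoint extension of $S$, bounded below by $c$, with $\mathfrak t_{S_{\rm F}}\subset\mathfrak t_H\subset\mathfrak t_{S_{{\rm K},c}}$; (ii) $H=c+R_c^*R_c^{**}$ for some operator $R_c$ from $\mathfrak H$ to $\mathfrak K_c$ satisfying $Q_c\subset R_c\subset(J_c^* )_{\rm reg}$.
   Context: Linear relations are linear subspaces of $\mathfrak H\times\mathfrak K$; $T^*$ adjoint, $T^{**}$ closure; products $RT=\{\{f,h\}:\exists g,\{f,g\}\in T,\{g,h\}\in R\}$; $c+T=\{\{f,g+cf\}:\{f,g\}\in T\}$; for closed $T$, $T_{\rm reg}=\{\{f,(I-\pi)g\}:\{f,g\}\in T\}$ with $\pi$ the projection onto $\mathrm{mul}\,T$. $S$ semibounded with lower bound $\gamma$: $\gamma$ is the supremum of $c$ with $(\varphi',\varphi)\ge c\|\varphi\|^2$ on $S$; $\mathfrak t(S)[\varphi,\psi]=(\varphi',\psi)$ on $\mathrm{dom}\,S$. A representing map for $\mathfrak t(S)-c$ is a linear operator $Q_c$ into a Hilbert space $\mathfrak K_c$ with $\mathrm{dom}\,Q_c=\mathrm{dom}\,S$ and $\mathfrak t(S)[\varphi,\psi]=c(\varphi,\psi)+(Q_c\varphi,Q_c\psi)$; companion relation $J_c=\{\{Q_c\varphi,\varphi'-c\varphi\}:\{\varphi,\varphi'\}\in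 S\}$. Friedrichs extension $S_{\rm F}=c+Q_c^*Q_c^{**}$, Kreĭn type extension $S_{{\rm K},c}=c+J_c^{**}J_c^*$. For a semibounded selfadjoint relation $H$, $\mathfrak t_H$ is its associated closed form (closure of $\mathfrak t(H)[\varphi,\psi]=(\varphi',\psi)$ on $\mathrm{dom}\,H$). Form inclusion $\mathfrak t_1\subset\mathfrak t_2$ means $\mathfrak t_2$ extends $\mathfrak t_1$. *)

(* Defs.v *)
From HB Require Import structures.
From mathcomp Require Import all_boot all_order all_algebra.
From mathcomp Require Import complex.
From mathcomp Require Import reals.
Set Implicit Arguments. Unset Strict Implicit. Unset Printing Implicit Defensive.
Import Order.TTheory GRing.Theory Num.Theory.
Local Open Scope ring_scope.
Local Open Scope complex_scope.

Section Defs.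
Variable R : realType.
Local Notation C := R[i].

Definition cvg_in (V : lmodType C) (ip : V -> V -> C) (u : nat -> V) (x : V) :=
  forall e : R, 0 < e -> exists N : nat, forall n, (N <= n)%N ->
    ip (u n - x) (u n - x) < e%:C.

Definition cauchy_in (V : lmodType C) (ip : V -> V -> C) (u : nat -> V) :=
  forall e : R, 0 < e -> exists N : nat, forall n m, (N <= n)%N -> (N <= m)%N ->
    ip (u n - u m) (u n - u m) < e%:C.

Definition is_hilbert (V : lmodType C) (ip : V -> V -> C) :=
  [/\ (forall (a : C) x y z, ip (a *: x + y) z = a * ip x z + ip y z),
      (forall x y, ip y x = (ip x y)^*),
      (forall x, 0 <= ip x x),
      (forall x, ip x x = 0 -> x = 0)
    & (forall u, cauchy_in ip u -> exists x, cvg_in ip u x)].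

Definition lrel (A B : Type) := A -> B -> Prop.

Definition linrel (A B : lmodType C) (T : lrel A B) :=
  [/\ T 0 0,
      (forall f g f' g', T f g -> T f' g' -> T (f + f') (g + g'))
    & (forall (a : C) f g, T f g -> T (a *: f) (a *: g))].

Definition relsub (A B : Type) (T1 T2 : lrel A B) := forall f g, T1 f g -> T2 f g.
Definition releq (A B : Type) (T1 T2 : lrel A B) := forall f g, T1 f g <-> T2 f g.

Definition rdom (A B : Type) (T : lrel A B) : A -> Prop := fun f => exists g, T f g.
Definition rmul (A B : lmodType C) (T : lrel A B) : B -> Prop := fun g => T 0 g.

Definition operator (A B : lmodType C) (T : lrel A B) :=
  linrel T /\ forall g, T 0 g -> g = 0.

Definition adj (A B : lmodType C) (ipA : A -> A -> C) (ipB : B -> B -> C)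
  (T : lrel A B) : lrel B A :=
  fun h k => forall f g, T f g -> ipB g h = ipA f k.

Definition rcomp (A B D : Type) (Rr : lrel B D) (T : lrel A B) : lrel A D :=
  fun f h => exists g, T f g /\ Rr g h.

Definition radd (A : lmodType C) (c : R) (T : lrel A A) : lrel A A :=
  fun f k => exists g, T f g /\ k = g + c%:C *: f.

(* T_reg = {{f, (I - pi) g}}, pi = orthogonal projection onto mul T
   (characterized: p in mul T and g - p orthogonal to mul T) *)
Definition rreg (A B : lmodType C) (ipB : B -> B -> C) (T : lrel A B) : lrel A B :=
  fun f k => exists g p, [/\ T f g, rmul T p, k = g - p
                          & forall m, rmul T m -> ipB k m = 0].

Definition bounded_below_by (A : lmodType C) (ip : A -> A -> C) (T : lrel A A) (c : R) :=
  forall f g, T f g -> c%:C * ip f f <= ip g f.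

Definition lower_bound (A : lmodType C) (ip : A -> A -> C) (S : lrel A A) (gamma : R) :=
  (forall c, bounded_below_by ip S c -> c <= gamma) /\
  (forall b, (forall c, bounded_below_by ip S c -> c <= b) -> gamma <= b).

Definition selfadjoint (A : lmodType C) (ip : A -> A -> C) (T : lrel A A) :=
  releq T (adj ip ip T).

Definition representing_map (A K : lmodType C) (ipA : A -> A -> C) (ipK : K -> K -> C)
  (S : lrel A A) (c : R) (Q : lrel A K) :=
  [/\ operator Q,
      (forall f, rdom Q f <-> rdom S f)
    & (forall phi phi' psi q q', S phi phi' -> Q phi q -> Q psi q' ->
         ipA phi' psi = c%:C * ipA phi psi + ipK q q')].

Definition companion (A K : lmodType C) (S : lrel A A) (c : R) (Q : lrel A K) : lrel K A :=
  fun q k => exists phi phi', [/\ S phi phi', Q phi q & k = phi' - c%:C *: phi].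

(* A form is represented by its graph: t phi psi z  <->  phi, psi in dom t and t[phi,psi] = z. *)
Definition form (A : Type) := A -> A -> C -> Prop.

Definition form_sub (A : Type) (t1 t2 : form A) := forall phi psi z, t1 phi psi z -> t2 phi psi z.

Definition tapprox (A : lmodType C) (ip : A -> A -> C) (T : lrel A A)
  (u u' : nat -> A) (phi : A) :=
  [/\ forall n, T (u n) (u' n),
      cvg_in ip u phi
    & forall e : R, 0 < e -> exists N : nat, forall n m, (N <= n)%N -> (N <= m)%N ->
        `|ip (u' n - u' m) (u n - u m)| < e%:C].

(* t_T : the closure of the form t(T)[phi,psi] = (phi',psi) on dom T *)
Definition tclos (A : lmodType C) (ip : A -> A -> C) (T : lrel A A) : form A :=
  fun phi psi z => exists u u' v v', [/\ tapprox ip T u u' phi, tapprox ip T v v' psi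
    & forall e : R, 0 < e -> exists N : nat, forall n, (N <= n)%N ->
        `|ip (u' n) (v n) - z| < e%:C].

Definition friedrichs (A K : lmodType C) (ipA : A -> A -> C) (ipK : K -> K -> C)
  (c : R) (Q : lrel A K) : lrel A A :=
  radd c (rcomp (adj ipA ipK Q) (adj ipK ipA (adj ipA ipK Q))).

Definition krein (A K : lmodType C) (ipA : A -> A -> C) (ipK : K -> K -> C)
  (c : R) (J : lrel K A) : lrel A A :=
  radd c (rcomp (adj ipA ipK (adj ipK ipA J)) (adj ipK ipA J)).

End Defs.

(* Main.v *)
Require Import Defs.
From mathcomp Require Import all_boot all_order all_algebra.
From mathcomp Require Import complex reals ring lra.
From mathcomp Require boolp classical_sets.
Set Implicit Arguments. Unset Strict Implicit. Unset Printing Implicit Defensive.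
Import Order.TTheory GRing.Theory Num.Theory.
Local Open Scope ring_scope.
Local Open Scope complex_scope.

Section IP.
Variable R : realType.
Local Notation C := R[i].
Variable V : lmodType C.
Variable ip : V -> V -> C.
Hypothesis hV : is_hilbert ip.

Lemma ip_lin a x y z : ip (a *: x + y) z = a * ip x z + ip y z.
Proof. by case: hV. Qed.
Lemma ipC x y : ip y x = (ip x y)^*%R.
Proof. by case: hV. Qed.
Lemma ip_ge0 x : 0 <= ip x x.
Proof. by case: hV. Qed.
Lemma ip_eq0 x : ip x x = 0 -> x = 0.
Proof. by case: hV => _ _ _ H _; apply: H. Qed.

Lemma ip0l z : ip 0 z = 0.
Proof.
have := ip_lin 1 0 0 z; rewrite scaler0 addr0 mul1r.
by move/(congr1 (fun t => t - ip 0 z)); rewrite subrr addrK.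
Qed.
Lemma ipDl x y z : ip (x + y) z = ip x z + ip y z.
Proof. by rewrite -[x in LHS]scale1r ip_lin mul1r. Qed.
Lemma ipZl a x z : ip (a *: x) z = a * ip x z.
Proof. by rewrite -[a *: x]addr0 ip_lin ip0l addr0. Qed.
Lemma ipNl x z : ip (- x) z = - ip x z.
Proof. by rewrite -scaleN1r ipZl mulN1r. Qed.
Lemma ipBl x y z : ip (x - y) z = ip x z - ip y z.
Proof. by rewrite ipDl ipNl. Qed.
Lemma ipDr x y z : ip x (y + z) = ip x y + ip x z.
Proof. by rewrite ipC ipDl rmorphD /= -!ipC. Qed.
Lemma ipZr x a z : ip x (a *: z) = a^*%R * ip x z.
Proof. by rewrite ipC ipZl rmorphM /= -ipC. Qed.
Lemma ip0r x : ip x 0 = 0.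
Proof. by rewrite ipC ip0l rmorph0. Qed.
Lemma ipNr x z : ip x (- z) = - ip x z.
Proof. by rewrite ipC ipNl rmorphN /= -ipC. Qed.
Lemma ipBr x y z : ip x (y - z) = ip x y - ip x z.
Proof. by rewrite ipDr ipNr. Qed.

Definition nn x := complex.Re (ip x x).
Lemma ipxx x : ip x x = (nn x)%:C.
Proof. by rewrite /nn RRe_real // ger0_real // ip_ge0. Qed.
Lemma nn_ge0 x : 0 <= nn x.
Proof. by rewrite -lecR -ipxx ip_ge0. Qed.
Lemma nn_eq0 x : nn x = 0 -> x = 0.
Proof. by move=> h; apply: ip_eq0; rewrite ipxx h. Qed.
Lemma nn0 : nn 0 = 0.
Proof. by rewrite /nn ip0l. Qed.

Lemma conj_real (r : R) : (r%:C)^*%R = r%:C.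
Proof. exact: conjc_real. Qed.

Lemma normC_real (z : C) : `|z| = (complex.Re `|z|)%:C.
Proof. by rewrite RRe_real // normr_real. Qed.

Lemma CS x y : `|ip x y| ^+ 2 <= ip x x * ip y y.
Proof.
have [->|y0] := eqVneq y 0; first by rewrite ip0r ip0l normr0 expr0n mulr0.
set q := ip y y.
have q0 : 0 < q.
  rewrite lt_def ip_ge0 andbT; apply/eqP => /ip_eq0 h; by rewrite h eqxx in y0.
have qn0 : q != 0 by rewrite gt_eqF.
set p := ip x y.
have qc : q^*%R = q by rewrite /q ipxx conj_real.
have := ip_ge0 (x - (p / q) *: y).
rewrite !(ipBl, ipBr, ipZl, ipZr) -/q -/p (ipC x y) -/p rmorphM /= fmorphV /= qc.
set pc := p^*%R.
set E := (X in 0 <= X -> _).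
have -> : E = ip x x - p * pc / q by rewrite /E; field.
rewrite /pc -sqr_normc subr_ge0 ler_pdivrMr //.
Qed.

Definition nc (z : C) := complex.Re `|z|.
Lemma normCE z : `|z| = (nc z)%:C.
Proof. exact: normC_real. Qed.
Lemma nc_ge0 z : 0 <= nc z.
Proof. by rewrite -ler0c -normCE normr_ge0. Qed.

Lemma CSR x y : nc (ip x y) ^+ 2 <= nn x * nn y.
Proof. by rewrite -lecR rmorphXn rmorphM /= -normCE -!ipxx CS. Qed.


Lemma ncC (r : R) : nc (r%:C) = `|r|.
Proof. by rewrite /nc normc_def /= expr0n /= addr0 sqrtr_sqr. Qed.

Lemma ltC_nc z (e : R) : (`|z| < e%:C) = (nc z < e).
Proof. by rewrite normCE ltcR. Qed.

Lemma nc_tri a b : nc (a + b) <= nc a + nc b.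
Proof. by rewrite -lecR rmorphD /= -!normCE ler_normD. Qed.

Lemma ncN a : nc (- a) = nc a.
Proof. by rewrite /nc normrN. Qed.

Lemma ncJ a : nc (a^*%R) = nc a.
Proof. by rewrite /nc norm_conjC. Qed.

Lemma nc_eq0 a : nc a = 0 -> a = 0.
Proof. by move=> h; apply/normr0_eq0; rewrite normCE h. Qed.

Lemma ncM a b : nc (a * b) = nc a * nc b.
Proof. by apply: complexI; rewrite rmorphM /= -!normCE normrM. Qed.

Definition cv (u : nat -> V) (x : V) := forall e : R, 0 < e ->
  exists N, forall n, (N <= n)%N -> nn (u n - x) < e.

Definition cvC (a : nat -> C) (l : C) := forall e : R, 0 < e ->
  exists N, forall n, (N <= n)%N -> `|a n - l| < e%:C.

Definition cvR (a : nat -> R) (l : R) := forall e : R, 0 < e ->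
  exists N, forall n, (N <= n)%N -> `|a n - l| < e.

Lemma cvg_inE u x : cvg_in ip u x <-> cv u x.
Proof.
split=> h e /h [N hN]; exists N => n /hN; by rewrite ipxx ltcR.
Qed.

Lemma complete u : (forall e : R, 0 < e -> exists N, forall n m, (N <= n)%N -> (N <= m)%N ->
  nn (u n - u m) < e) -> exists x, cv u x.
Proof.
move=> h; case: hV => _ _ _ _ /(_ u) []; last by move=> x /cvg_inE; exists x.
by move=> e /h [N hN]; exists N => n m hn hm; rewrite ipxx ltcR hN.
Qed.

Lemma small_ip (e B : R) : 0 < e -> 0 <= B -> exists2 d : R, 0 < d &
  forall a b, nn a < d -> nn b <= B -> nc (ip a b) < e.
Proof.
move=> e0 B0; exists (e ^+ 2 / (B + 1)).
  by apply: divr_gt0; [exact: exprn_gt0 | lra].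
move=> a b ha hb; have := CSR a b; have := nc_ge0 (ip a b).
have := nn_ge0 a; have := nn_ge0 b.
set d := e ^+ 2 / (B + 1) in ha *.
have hd : d * (B + 1) = e ^+ 2 by rewrite /d divfK //; lra.
move: (nn a) (nn b) (nc (ip a b)) ha hb hd => x y z; nra.
Qed.

Lemma cv_ev u x (e : R) : cv u x -> 0 < e -> exists N, forall n, (N <= n)%N -> nn (u n - x) < e.
Proof. by move=> h /h. Qed.

Lemma ip_cv u x v y : cv u x -> cv v y -> cvC (fun n => ip (u n) (v n)) (ip x y).
Proof.
move=> hu hv e e0.
have e30 : 0 < e / 3%:R by apply: divr_gt0 => //; rewrite ltr0n.
have [d1 d10 H1] := small_ip e30 (@ler01 R).
have [d2 d20 H2] := small_ip e30 (nn_ge0 y).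
have [d3 d30 H3] := small_ip e30 (nn_ge0 x).
have m1 : 0 < Order.min d1 d2 by rewrite lt_min d10 d20.
have m2 : 0 < Order.min (Order.min 1 d1) d3 by rewrite !lt_min ltr01 d10 d30.
have [N1 hN1] := hu _ m1.
have [N2 hN2] := hv _ m2.
exists (maxn N1 N2) => n; rewrite geq_max => /andP[/hN1 h1 /hN2 h2].
rewrite ltC_nc.
have -> : ip (u n) (v n) - ip x y = ip (u n - x) (v n - y) + ip (u n - x) y
   + (ip (v n - y) x)^*%R.
  rewrite -ipC !(ipBl, ipBr); ring.
have t1 : nc (ip (u n - x) (v n - y)) < e / 3%:R.
  apply: H1; first by move: h1; rewrite lt_min => /andP[].
  by move: h2; rewrite !lt_min => /andP[/andP[/ltW]].
have t2 : nc (ip (u n - x) y) < e / 3%:R.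
  by apply: H2 => //; move: h1; rewrite lt_min => /andP[].
have t3 : nc ((ip (v n - y) x)^*%R) < e / 3%:R.
  by rewrite ncJ; apply: H3 => //; move: h2; rewrite lt_min => /andP[].
apply: (le_lt_trans (nc_tri _ _)).
have := nc_tri (ip (u n - x) (v n - y)) (ip (u n - x) y).
have h3 : e / 3%:R * 3%:R = e by rewrite divfK // pnatr_eq0.
lra.
Qed.

Arguments ip_cv {u x v y}.

Lemma cvC_uniq a l1 l2 : cvC a l1 -> cvC a l2 -> l1 = l2.
Proof.
move=> h1 h2; apply/eqP; rewrite -subr_eq0; apply/eqP/nc_eq0.
have g0 := nc_ge0 (l1 - l2).
apply/eqP; rewrite eq_le g0 andbT; apply/negP => /negP; rewrite -ltNge => pos.
have p2 : 0 < nc (l1 - l2) / 2%:R by apply: divr_gt0.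
have [N1 hN1] := h1 _ p2; have [N2 hN2] := h2 _ p2.
have := hN1 (maxn N1 N2) (leq_maxl _ _); have := hN2 (maxn N1 N2) (leq_maxr _ _).
rewrite !ltC_nc => b2 b1.
have := nc_tri (l1 - a (maxn N1 N2)) (a (maxn N1 N2) - l2).
have -> : l1 - a (maxn N1 N2) + (a (maxn N1 N2) - l2) = l1 - l2 by ring.
rewrite -ncN opprB in b1.
have h3 : nc (l1 - l2) / 2%:R * 2%:R = nc (l1 - l2) by rewrite divfK // pnatr_eq0.
lra.
Qed.

Arguments cvC_uniq {a l1 l2}.

Lemma cvC_const l : cvC (fun _ => l) l.
Proof. by move=> e e0; exists 0%N => n _; rewrite subrr normr0 ltcR. Qed.

Lemma ip_cv_l u x y : cv u x -> cvC (fun n => ip (u n) y) (ip x y).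
Proof.
move=> hu; have hc : cv (fun _ => y) y by move=> e e0; exists 0%N => n _; rewrite subrr nn0.
by move=> e /(ip_cv hu hc) [N hN]; exists N.
Qed.

Arguments ip_cv_l {u x} y.

Lemma ip_cv_r u x y : cv u x -> cvC (fun n => ip y (u n)) (ip y x).
Proof.
move=> hu; have hc : cv (fun _ => y) y by move=> e e0; exists 0%N => n _; rewrite subrr nn0.
by move=> e /(ip_cv hc hu) [N hN]; exists N.
Qed.

Arguments ip_cv_r {u x} y.

Lemma cvC_ext a b l : (forall n, a n = b n) -> cvC a l -> cvC b l.
Proof. by move=> h H e /H [N hN]; exists N => n /hN; rewrite h. Qed.

Arguments cvC_ext {a b l}.

Lemma cvC_ev a b l : (exists N, forall n, (N <= n)%N -> a n = b n) -> cvC a l -> cvC b l.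
Proof.
move=> [M hM] H e /H [N hN]; exists (maxn M N) => n; rewrite geq_max => /andP[h1 h2].
by rewrite -hM // hN.
Qed.

Lemma cv_uniq u x y : cv u x -> cv u y -> x = y.
Proof.
move=> hx hy; apply/eqP; rewrite -subr_eq0; apply/eqP/ip_eq0.
have := ip_cv hx hx; have := ip_cv hy hx; have := ip_cv hx hy; have := ip_cv hy hy.
move=> a b c d.
rewrite ipBl !ipBr.
by rewrite -(cvC_uniq d b) -(cvC_uniq c a) (cvC_uniq d c) !subrr.
Qed.

Lemma orth_lim u x m : cv u x -> (forall n, ip (u n) m = 0) -> ip x m = 0.
Proof.
move=> h h0; apply: (cvC_uniq (ip_cv_l m h)).
exact: (@cvC_ext (fun _ => 0) _ 0 (fun n => esym (h0 n)) (cvC_const 0)).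
Qed.


Lemma nnE x : (nn x)%:C = ip x x.
Proof. by rewrite ipxx. Qed.

Lemma para a b : nn (a + b) + nn (a - b) = 2%:R * nn a + 2%:R * nn b.
Proof.
apply: complexI; rewrite !rmorphD !rmorphM /= !nnE.
rewrite !(ipDl, ipDr, ipNl, ipNr) rmorph_nat opprK; ring.
Qed.

Lemma nnN a : nn (- a) = nn a.
Proof. by rewrite /nn ipNl ipNr opprK. Qed.

Lemma nnB a b : nn (a - b) = nn (b - a).
Proof. by rewrite -nnN opprB. Qed.

Lemma nnZ s a : nn (s *: a) = nc s ^+ 2 * nn a.
Proof.
apply: complexI; rewrite rmorphM rmorphXn /= -normCE normCK !nnE ipZl ipZr.
by rewrite mulrA.
Qed.

Lemma nnD_le a b : nn (a + b) <= 2%:R * nn a + 2%:R * nn b.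
Proof. by rewrite -para lerDl nn_ge0. Qed.

Lemma cv_const x : cv (fun _ => x) x.
Proof. by move=> e e0; exists 0%N => n _; rewrite subrr nn0. Qed.

Lemma cv_add u x v y : cv u x -> cv v y -> cv (fun n => u n + v n) (x + y).
Proof.
move=> hu hv e e0.
have e4 : 0 < e / 4%:R by apply: divr_gt0 => //; rewrite ltr0n.
have [N1 h1] := hu _ e4; have [N2 h2] := hv _ e4.
exists (maxn N1 N2) => n; rewrite geq_max => /andP[/h1 b1 /h2 b2].
have -> : u n + v n - (x + y) = (u n - x) + (v n - y) by rewrite opprD addrACA.
have := nnD_le (u n - x) (v n - y).
have h4 : e / 4%:R * 4%:R = e by rewrite divfK // pnatr_eq0.
lra.
Qed.

Arguments cv_add {u x v y}.

Lemma cv_scale s u x : cv u x -> cv (fun n => s *: u n) (s *: x).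
Proof.
move=> hu e e0.
have q0 : 0 < nc s ^+ 2 + 1 by have := sqr_ge0 (nc s); lra.
have e4 : 0 < e / (nc s ^+ 2 + 1) by apply: divr_gt0.
have [N h1] := hu _ e4.
exists N => n /h1 b1.
rewrite -scalerBr nnZ.
have h4 : e / (nc s ^+ 2 + 1) * (nc s ^+ 2 + 1) = e by rewrite divfK // gt_eqF.
have := nn_ge0 (u n - x); have := sqr_ge0 (nc s).
move: (nc s ^+ 2) (nn (u n - x)) b1 h4 => A B; nra.
Qed.

Arguments cv_scale s {u x}.

Lemma cv_sub u x v y : cv u x -> cv v y -> cv (fun n => u n - v n) (x - y).
Proof.
move=> hu hv; have := cv_add hu (cv_scale (-1) hv).
by rewrite scaleN1r => H e /H [N hN]; exists N => n /hN; rewrite scaleN1r.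
Qed.

Arguments cv_sub {u x v y}.


Lemma nn_cv u x : cv u x -> cvR (fun n => nn (u n)) (nn x).
Proof.
move=> hu e e0; have [N hN] := ip_cv hu hu e e0; exists N => n /hN.
by rewrite -!nnE -rmorphB ltC_nc ncC.
Qed.

Arguments nn_cv {u x}.

Lemma cvR_ge (r : nat -> R) l d : cvR r l -> (forall n, d <= r n) -> d <= l.
Proof.
move=> h hd; rewrite leNgt; apply/negP => ld.
have dl : 0 < d - l by rewrite subr_gt0.
have [N hN] := h _ dl.
have := hN N (leqnn N); have := hd N.
move: (r N) => x; rewrite ltr_norml; lra.
Qed.

Arguments cvR_ge {r l d}.

Lemma cvR_le (r : nat -> R) l d : cvR r l ->
  (forall e, 0 < e -> exists N, forall n, (N <= n)%N -> r n < d + e) -> l <= d.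
Proof.
move=> h hd; rewrite leNgt; apply/negP => ld.
have e2 : 0 < (l - d) / 2%:R by apply: divr_gt0; rewrite ?subr_gt0 ?ltr0n.
have [N1 h1] := h _ e2; have [N2 h2] := hd _ e2.
have := h1 (maxn N1 N2) (leq_maxl _ _); have := h2 (maxn N1 N2) (leq_maxr _ _).
have h4 : (l - d) / 2%:R * 2%:R = l - d by rewrite divfK // pnatr_eq0.
move: (r (maxn N1 N2)) => x; rewrite ltr_norml; lra.
Qed.

Arguments cvR_le {r l d}.

Lemma inv_small (e : R) : 0 < e -> exists N, forall n, (N <= n)%N -> (n.+1%:R)^-1 < e.
Proof.
move=> e0; have ie : 0 <= e^-1 by rewrite invr_ge0 ltW.
have := @archi_boundP _ (e^-1) ie.
set N := Num.Def.archi_bound _ => hN; exists N => n hn.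
have hn' : (N%:R : R) <= n.+1%:R by rewrite ler_nat; apply: leqW.
have p : (0 : R) < n.+1%:R by rewrite ltr0n.
rewrite -[_^-1]mul1r ltr_pdivrMr //.
have ee : e * e^-1 = 1 by rewrite mulfV // gt_eqF.
move: (e^-1) (N%:R : R) (n.+1%:R : R) hN hn' p ee => a b c; nra.
Qed.

Lemma proj (M : V -> Prop) : M 0 -> (forall x y, M x -> M y -> M (x + y)) ->
  (forall a x, M x -> M (a *: x)) -> forall h,
  exists a (u : nat -> V), [/\ forall n, M (u n), cv u a & forall x, M x -> ip (h - a) x = 0].
Proof.
move=> M0 MD MZ h.
pose E : classical_sets.set R := fun r => exists x, M x /\ r = nn (h - x).
have hE : classical_sets.has_inf E.
  split; first by exists (nn (h - 0)), 0.
  by exists 0 => r [x [_ ->]]; exact: nn_ge0.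
set d := reals.inf E.
have hd : forall x, M x -> d <= nn (h - x).
  by move=> x Mx; apply: (reals.ge_inf (proj2 hE)); exists x.
have ex : forall n : nat, exists x, M x /\ nn (h - x) < d + (n.+1%:R)^-1.
  move=> n; have pos : 0 < (n.+1%:R : R)^-1 by rewrite invr_gt0 ltr0Sn.
  have [r [x [Mx ->]] lt] := reals.inf_adherent pos hE.
  by exists x.
pose u n := proj1_sig (boolp.cid (ex n)).
have Mu n : M (u n) by rewrite /u; case: (boolp.cid _) => x [].
have du n : nn (h - u n) < d + (n.+1%:R)^-1 by rewrite /u; case: (boolp.cid _) => x [].
have two0 : (2%:R : C) != 0 by rewrite pnatr_eq0.
have cau : forall n m, nn (u n - u m) <= 2%:R * (n.+1%:R)^-1 + 2%:R * (m.+1%:R)^-1.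
  move=> n m.
  pose mid := (2%:R : C)^-1 *: (u n + u m).
  have Mm : M mid by apply: MZ; apply: MD.
  have := para (h - u n) (h - u m).
  have -> : h - u n + (h - u m) = (2%:R : C) *: (h - mid).
    by rewrite /mid scalerBr scalerA mulfV // scale1r scaler_nat mulr2n opprD addrACA.
  rewrite nnZ.
  have -> : h - u n - (h - u m) = u m - u n by rewrite opprB addrC addrA subrK.
  have e2 : (2%:R : C) = (2%:R : R)%:C by rewrite rmorph_nat.
  have -> : nc (2%:R : C) = 2%:R by rewrite e2 ncC ger0_norm.
  have -> : (2%:R : R) ^+ 2 = 4%:R by rewrite expr2 -natrM.
  have := hd _ Mm; have := du n; have := du m; rewrite (nnB (u m)).
  move: (n.+1%:R^-1 : R) (m.+1%:R^-1 : R) => i j; lra.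
have [a ha] : exists a, cv u a.
  apply: complete => e e0.
  have e4 : 0 < e / 4%:R by apply: divr_gt0 => //; rewrite ltr0n.
  have [N hN] := inv_small e4.
  exists N => n m /hN hn /hN hm; apply: (le_lt_trans (cau n m)).
  have h4 : e / 4%:R * 4%:R = e by rewrite divfK // pnatr_eq0.
  move: (n.+1%:R^-1 : R) (m.+1%:R^-1 : R) hn hm => i j; lra.
exists a, u; split => // x Mx.
have hcv : forall t : C, d <= nn (h - (a + t *: x)).
  move=> t; apply: (cvR_ge (nn_cv (cv_sub (cv_const h) (cv_add ha (cv_const (t *: x)))))).
  by move=> n; apply: hd; apply: MD => //; apply: MZ.
have hle : nn (h - a) <= d.
  apply: (cvR_le (nn_cv (cv_sub (cv_const h) ha))) => e e0.
  have [N hN] := inv_small e0; exists N => n /hN hn; have := du n.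
  move: (n.+1%:R^-1 : R) hn => i; lra.
set g := h - a; set w := ip g x.
set s : R := (nn x + 1)^-1.
have s0 : 0 < s by rewrite invr_gt0; have := nn_ge0 x; lra.
have s1 : s * (nn x + 1) = 1 by rewrite mulVf // gt_eqF //; have := nn_ge0 x; lra.
have hw : (nc w ^+ 2)%:C = w * w^*%R by rewrite rmorphXn /= -normCE normCK.
have key : nn (h - (a + (s%:C * w) *: x)) =
   nn g - 2%:R * s * nc w ^+ 2 + s ^+ 2 * nc w ^+ 2 * nn x.
  move: (nc w ^+ 2) hw => W hw.
  apply: complexI; rewrite nnE opprD addrA -/g.
  rewrite rmorphD rmorphB !rmorphM /= hw rmorph_nat.
  rewrite !nnE !(ipBl, ipBr, ipZl, ipZr) (ipC h x) (ipC a x) /w ipBl !rmorphM !rmorphB /= conj_real.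
  ring.
have := hcv (s%:C * w); rewrite key.
have W0 := sqr_ge0 (nc w); have N0 := nn_ge0 x.
move=> hh; set W := nc w ^+ 2 in W0 hh; set X := nn x in N0 hh s1.
have sX : s * X = 1 - s by move: s1; rewrite mulrDr mulr1; lra.
have e1 : s ^+ 2 * W * X = s * W * (1 - s) by rewrite -sX; ring.
rewrite e1 in hh.
have P0 : 0 <= s * W by rewrite mulr_ge0 // ltW.
have q : 0 <= s * (s * W) by apply: mulr_ge0 => //; exact: ltW.
have sW : s * W <= 0 by lra.
have Wle : W <= 0 by move: sW; rewrite pmulr_rle0.
have W00 : W = 0 by apply/eqP; rewrite eq_le Wle W0.
by apply: nc_eq0; move: W00; rewrite /W => /eqP; rewrite sqrf_eq0 => /eqP.
Qed.


End IP.

Arguments ipxx {R V ip} hV x.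
Arguments nn {R V} ip x.

Section Prod.
Variable R : realType.
Local Notation C := R[i].
Variables (V W : lmodType C) (ipV : V -> V -> C) (ipW : W -> W -> C).
Hypotheses (hV : is_hilbert ipV) (hW : is_hilbert ipW).

Definition ipP (p q : V * W) := ipV p.1 q.1 + ipW p.2 q.2.

Lemma ipP_xx p : ipP p p = (nn ipV p.1 + nn ipW p.2)%:C.
Proof. by rewrite /ipP (ipxx hV) (ipxx hW) rmorphD. Qed.

Lemma nnP p : nn ipP p = nn ipV p.1 + nn ipW p.2.
Proof. by rewrite /nn ipP_xx. Qed.

Lemma hilbP : is_hilbert ipP.
Proof.
split.
- move=> a x y z; rewrite /ipP /= !(ip_lin hV, ip_lin hW); ring.
- by move=> x y; rewrite /ipP rmorphD /= (ipC hV x.1 y.1) (ipC hW x.2 y.2).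
- by move=> x; rewrite ipP_xx ler0c addr_ge0 // nn_ge0.
- move=> [x1 x2]; rewrite ipP_xx => /complexI /eqP; rewrite paddr_eq0 ?nn_ge0 //.
  by case/andP => /eqP /(nn_eq0 hV) /= -> /eqP /(nn_eq0 hW) /= ->.
- move=> u hu.
  have [a1 h1] : exists a, cv ipV (fun n => (u n).1) a.
    apply: (complete hV) => e /hu [N hN]; exists N => n m /hN H /H.
    rewrite ipP_xx ltcR /= => H'; apply: le_lt_trans H'.
    by rewrite lerDl nn_ge0.
  have [a2 h2] : exists a, cv ipW (fun n => (u n).2) a.
    apply: (complete hW) => e /hu [N hN]; exists N => n m /hN H /H.
    rewrite ipP_xx ltcR /= => H'; apply: le_lt_trans H'.
    by rewrite lerDr nn_ge0.
  exists (a1, a2) => e e0.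
  have e2 : 0 < e / 2%:R by apply: divr_gt0 => //; rewrite ltr0n.
  have [N1 hN1] := h1 _ e2; have [N2 hN2] := h2 _ e2.
  exists (maxn N1 N2) => n; rewrite geq_max => /andP[/hN1 b1 /hN2 b2].
  rewrite ipP_xx ltcR /=.
  have h4 : e / 2%:R * 2%:R = e by rewrite divfK // pnatr_eq0.
  lra.
Qed.

End Prod.

Section Rel.
Variable R : realType.
Local Notation C := R[i].
Variables (A B : lmodType C) (ipA : A -> A -> C) (ipB : B -> B -> C).
Hypotheses (hA : is_hilbert ipA) (hB : is_hilbert ipB).

Lemma projrel (T : lrel A B) : linrel T -> forall h k,
  exists a b (u : nat -> A) (v : nat -> B), [/\ forall n, T (u n) (v n),
    cv ipA u a, cv ipB v b &
    forall x y, T x y -> ipA (h - a) x + ipB (k - b) y = 0].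
Proof.
case=> T0 TD TZ h k.
have hP := hilbP hA hB.
have [[a b] [w [Mw cw orth]]] := proj hP (M := fun p => T p.1 p.2) T0
  (fun x y => TD _ _ _ _) (fun a x => TZ _ _ _) (h, k).
exists a, b, (fun n => (w n).1), (fun n => (w n).2); split => //.
- move=> e /cw [N hN]; exists N => n /hN; rewrite (nnP hA hB) /=.
  by apply: le_lt_trans; rewrite lerDl (nn_ge0 hB).
- move=> e /cw [N hN]; exists N => n /hN; rewrite (nnP hA hB) /=.
  by apply: le_lt_trans; rewrite lerDr (nn_ge0 hA).
- by move=> x y Txy; have := orth (x, y) Txy.
Qed.

End Rel.

Definition closedrel (R : realType) (X Y : lmodType R[i]) (ipX : X -> X -> R[i])
  (ipY : Y -> Y -> R[i]) (T : lrel X Y) :=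
  forall u v f g, (forall n, T (u n) (v n)) -> cv ipX u f -> cv ipY v g -> T f g.

Section Rel1.
Variable R : realType.
Local Notation C := R[i].
Variables (A B : lmodType C) (ipA : A -> A -> C) (ipB : B -> B -> C).
Hypotheses (hA : is_hilbert ipA) (hB : is_hilbert ipB).

Lemma adj_lin (T : lrel A B) : linrel (adj ipA ipB T).
Proof.
split.
- by move=> f g _; rewrite (ip0r hA) (ip0r hB).
- by move=> h k h' k' H1 H2 f g Tfg; rewrite (ipDr hA) (ipDr hB) (H1 _ _ Tfg) (H2 _ _ Tfg).
- by move=> a h k H f g Tfg; rewrite (ipZr hA) (ipZr hB) (H _ _ Tfg).
Qed.

Lemma adj_closed (T : lrel A B) : closedrel ipB ipA (adj ipA ipB T).
Proof.
move=> u v h k H hu hv f g Tfg.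
have c1 := ip_cv_r hB g hu; have c2 := ip_cv_r hA f hv.
apply: (cvC_uniq c1); apply: cvC_ext c2 => n; by rewrite (H n f g Tfg).
Qed.

Lemma adj_anti (T1 T2 : lrel A B) : relsub T1 T2 -> relsub (adj ipA ipB T2) (adj ipA ipB T1).
Proof. by move=> s h k H f g /s; apply: H. Qed.

Lemma adj_releq (T1 T2 : lrel A B) : releq T1 T2 -> releq (adj ipA ipB T1) (adj ipA ipB T2).
Proof.
move=> e h k; split => H f g Tfg; apply: H; by apply/e.
Qed.

Lemma sub_adj2 (T : lrel A B) : relsub T (adj ipB ipA (adj ipA ipB T)).
Proof.
move=> f g Tfg h k H.
by rewrite (ipC hA f k) (ipC hB g h) (H f g Tfg).
Qed.

Lemma adj_mul_orth (T : lrel A B) h k p : adj ipA ipB T h k -> T 0 p -> ipB p h = 0.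
Proof. by move=> H /H ->; rewrite (ip0l hA). Qed.

Lemma adj_dom_orth (T : lrel A B) k f g : adj ipA ipB T 0 k -> T f g -> ipA f k = 0.
Proof. by move=> H /H <-; rewrite (ip0r hB). Qed.

Lemma lin_sub (T : lrel A B) f g f' g' : linrel T -> T f g -> T f' g' -> T (f - f') (g - g').
Proof.
case=> T0 TD TZ h1 h2; apply: TD => //.
by have := TZ (-1) _ _ h2; rewrite !scaleN1r.
Qed.

Lemma rreg_intro (T : lrel A B) f w : linrel T -> T f w ->
  (forall m, rmul T m -> ipB w m = 0) -> rreg ipB T f w.
Proof.
case=> T0 _ _ Tfw orth; exists w, 0.
split; [done | done | exact: (esym (subr0 w)) | exact: orth].
Qed.

Lemma rreg_sub (T : lrel A B) f w : linrel T -> rreg ipB T f w -> T f w.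
Proof.
move=> lT [g [p [Tfg Tp -> _]]]; have := lin_sub lT Tfg Tp; by rewrite subr0.
Qed.

Lemma rreg_orth (T : lrel A B) f w m : rreg ipB T f w -> rmul T m -> ipB w m = 0.
Proof. by move=> [g [p [_ _ -> H]]] /H. Qed.

Lemma rreg_uniq (T : lrel A B) f w1 w2 : linrel T -> rreg ipB T f w1 -> rreg ipB T f w2 -> w1 = w2.
Proof.
move=> lT r1 r2.
have m : rmul T (w1 - w2).
  by have := lin_sub lT (rreg_sub lT r1) (rreg_sub lT r2); rewrite subrr.
apply/eqP; rewrite -subr_eq0; apply/eqP/(ip_eq0 hB).
by rewrite (ipBl hB) (rreg_orth r1 m) (rreg_orth r2 m) subrr.
Qed.

Lemma rreg_mul0 (T : lrel A B) w : linrel T -> rreg ipB T 0 w -> w = 0.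
Proof.
move=> lT r; have m : rmul T w := rreg_sub lT r.
exact: (ip_eq0 hB (rreg_orth r m)).
Qed.

Lemma rreg_lin (T : lrel A B) : linrel T -> linrel (rreg ipB T).
Proof.
move=> lT; have [T0 TD TZ] := lT; split.
- by apply: rreg_intro => // m _; rewrite (ip0l hB).
- move=> f g f' g' r1 r2; apply: rreg_intro => //.
    by apply: TD; apply: rreg_sub.
  by move=> m Tm; rewrite (ipDl hB) (rreg_orth r1 Tm) (rreg_orth r2 Tm) addr0.
- move=> a f g r; apply: rreg_intro => //.
    by apply: TZ; apply: rreg_sub.
  by move=> m Tm; rewrite (ipZl hB) (rreg_orth r Tm) mulr0.
Qed.

Lemma rreg_closed (T : lrel A B) : linrel T -> closedrel ipA ipB T -> closedrel ipA ipB (rreg ipB T).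
Proof.
move=> lT cT u v f g H hu hv; apply: rreg_intro => //.
  by apply: (cT u v) => // n; apply: rreg_sub.
by move=> m Tm; apply: (orth_lim hB hv) => n; apply: rreg_orth (H n) Tm.
Qed.

Lemma operator_rreg (T : lrel A B) : linrel T -> operator (rreg ipB T).
Proof. by move=> lT; split; [exact: rreg_lin | move=> g; exact: rreg_mul0]. Qed.

Lemma VN (T : lrel A B) : linrel T -> closedrel ipA ipB T -> forall h,
  exists f w y, [/\ T f w, adj ipA ipB T w y & f + y = h].
Proof.
move=> lT cT h.
have [a [b [u [v [Tuv ca cb orth]]]]] := projrel hA hB lT h 0.
exists a, b, (h - a); split; first exact: (cT u v).
  move=> x y Txy; have := orth x y Txy; rewrite sub0r (ipNl hB) => /eqP.
  rewrite addr_eq0 opprK => /eqP e.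
  by rewrite (ipC hB) (ipC hA) e.
by rewrite addrC subrK.
Qed.

Lemma CORE (T : lrel A B) : linrel T -> closedrel ipA ipB T -> forall phi w,
  rreg ipB T phi w -> exists u v, [/\ forall n, T (u n) (v n) /\ exists k, adj ipA ipB T (v n) k,
    cv ipA u phi & cv ipB v w].
Proof.
move=> lT cT phi w rw.
have [T0 TD TZ] := lT; have [J0 JD JZ] := adj_lin T.
pose M x y := T x y /\ exists k, adj ipA ipB T y k.
have lM : linrel M.
  split; first by split => //; exists 0.
  - by move=> f g f' g' [h1 [k1 a1]] [h2 [k2 a2]]; split; [exact: TD | exists (k1 + k2); exact: JD].
  - by move=> a f g [h1 [k1 a1]]; split; [exact: TZ | exists (a *: k1); exact: JZ].
have [a [b [u [v [Muv ca cb orth]]]]] := projrel hA hB lM phi w.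
have Tab : T a b by apply: (cT u v) => // n; case: (Muv n).
have Tde : T (phi - a) (w - b) by apply: lin_sub => //; exact: rreg_sub rw.
have [f [w' [y' [Tfw ay e]]]] := VN lT cT (phi - a).
have d0 : phi - a = 0.
  apply: (ip_eq0 hA); have := orth f w' (conj Tfw (ex_intro _ y' ay)).
  rewrite (ay _ _ Tde) -(ipDr hA) e => ->; done.
have Te : rmul T (w - b) by move: Tde; rewrite d0.
have ob : ipB b (w - b) = 0.
  apply: (orth_lim hB cb) => n; case: (Muv n) => _ [k an].
  by rewrite (ipC hB) (adj_mul_orth an Te) rmorph0.
have e0 : w - b = 0.
  apply: (ip_eq0 hB); by rewrite {1}(ipBl hB) (rreg_orth rw Te) ob subrr.
exists u, v; split => //.
- by move: ca; rewrite -(subr0 phi) -d0 opprB addrC subrK.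
- by move: cb; rewrite -(subr0 w) -e0 opprB addrC subrK.
Qed.

End Rel1.

Section Rel2.
Variable R : realType.
Local Notation C := R[i].
Variables (A B : lmodType C) (ipA : A -> A -> C) (ipB : B -> B -> C).
Hypotheses (hA : is_hilbert ipA) (hB : is_hilbert ipB).

Lemma adj3 (T : lrel A B) :
  releq (adj ipA ipB (adj ipB ipA (adj ipA ipB T))) (adj ipA ipB T).
Proof.
move=> h k; split.
- by apply: adj_anti; exact: sub_adj2.
- exact: (sub_adj2 hB hA).
Qed.

Lemma linrel_releq (T1 T2 : lrel A B) : releq T1 T2 -> linrel T1 -> linrel T2.
Proof.
move=> e [T0 TD TZ]; split.
- by apply/e.
- by move=> f g f' g' /e h1 /e h2; apply/e; apply: TD.
- by move=> a f g /e h; apply/e; apply: TZ.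
Qed.

Lemma closed_releq (T1 T2 : lrel A B) : releq T1 T2 -> closedrel ipA ipB T1 -> closedrel ipA ipB T2.
Proof. by move=> e cT u v f g H hu hv; apply/e; apply: (cT u v) => // n; apply/e. Qed.

Lemma CL (T : lrel A B) f g : linrel T -> adj ipB ipA (adj ipA ipB T) f g ->
  exists u v, [/\ forall n, T (u n) (v n), cv ipA u f & cv ipB v g].
Proof.
move=> lT H.
have [a [b [u [v [Tuv ca cb orth]]]]] := projrel hA hB lT f g.
have Hab : adj ipB ipA (adj ipA ipB T) a b.
  have cc := @adj_closed _ _ _ _ _ hB hA (adj ipA ipB T).
  apply: (cc u v _ _ _ ca cb) => n.
  exact: (sub_adj2 hA hB).
have Jhk : adj ipA ipB T (g - b) (a - f).
  move=> x y Txy; have := orth x y Txy; rewrite addrC => /eqP; rewrite addr_eq0 => /eqP e.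
  by rewrite (ipC hB (g - b) y) e rmorphN /= -(ipC hA (f - a) x) -(ipNr hA) opprB.
have e1 := H _ _ Jhk; have e2 := Hab _ _ Jhk.
have z : ipA (a - f) (a - f) + ipB (g - b) (g - b) = 0.
  by rewrite (ipBr hA) (ipBr hB) e1 e2; ring.
move/eqP: z; rewrite paddr_eq0 ?(ip_ge0 hA) ?(ip_ge0 hB) // => /andP[/eqP z1 /eqP z2].
have ea : a = f by apply/eqP; rewrite -subr_eq0; apply/eqP; exact: (ip_eq0 hA).
have eb : b = g by apply/eqP; rewrite eq_sym -subr_eq0; apply/eqP; exact: (ip_eq0 hB).
by exists u, v; split => //; rewrite -?ea -?eb.
Qed.

End Rel2.
Section CvC.
Variable R : realType.
Local Notation C := R[i].

Lemma cvC_add (a b : nat -> C) l m : cvC a l -> cvC b m -> cvC (fun n => a n + b n) (l + m).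
Proof.
move=> ha hb e e0.
have e2 : 0 < e / 2%:R by apply: divr_gt0 => //; rewrite ltr0n.
have [N1 h1] := ha _ e2; have [N2 h2] := hb _ e2.
exists (maxn N1 N2) => n; rewrite geq_max => /andP[/h1 b1 /h2 b2].
rewrite ltC_nc; rewrite ltC_nc in b1; rewrite ltC_nc in b2.
have -> : a n + b n - (l + m) = (a n - l) + (b n - m) by ring.
have := nc_tri (a n - l) (b n - m).
have h4 : e / 2%:R * 2%:R = e by rewrite divfK // pnatr_eq0.
lra.
Qed.

Lemma cvC_scale (a : nat -> C) l s : cvC a l -> cvC (fun n => s * a n) (s * l).
Proof.
move=> ha e e0.
have q0 : 0 < nc s + 1 by have := nc_ge0 s; lra.
have e4 : 0 < e / (nc s + 1) by apply: divr_gt0.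
have [N h1] := ha _ e4.
exists N => n /h1 b1; rewrite ltC_nc in b1.
rewrite -mulrBr ltC_nc ncM.
have h4 : e / (nc s + 1) * (nc s + 1) = e by rewrite divfK // gt_eqF.
have := nc_ge0 (a n - l); have := nc_ge0 s.
move: (nc s) (nc (a n - l)) b1 h4 => x y; nra.
Qed.

End CvC.

Section Op.
Variable R : realType.
Local Notation C := R[i].
Variables (A B : lmodType C) (ipA : A -> A -> C) (ipB : B -> B -> C).
Hypotheses (hA : is_hilbert ipA) (hB : is_hilbert ipB).
Variable c : R.

Lemma SYM (T : lrel A B) (X : lrel B A) : releq X (adj ipA ipB T) ->
  relsub (radd c (rcomp X T)) (adj ipA ipA (radd c (rcomp X T))).
Proof.
move=> eX f k [y [[w [Tfw Xwy]] ->]] f2 k2 [y2 [[w2 [Tfw2 Xwy2]] ->]].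
have a1 := (proj1 (eX _ _) Xwy) _ _ Tfw2.
have a2 := (proj1 (eX _ _) Xwy2) _ _ Tfw.
rewrite (ipDl hA) (ipDr hA) (ipZl hA) (ipZr hA) conj_real.
rewrite (ipC hA f y2) -a2 -(ipC hB) a1.
done.
Qed.


Lemma SA (T : lrel A B) (X : lrel B A) : linrel T -> closedrel ipA ipB T ->
  releq X (adj ipA ipB T) ->
  relsub (adj ipA ipA (radd c (rcomp X T))) (radd c (rcomp X T)).
Proof.
move=> lT cT eX h k Hhk.
set A0 := radd c (rcomp X T) in Hhk *.
have sym := SYM eX.
have lJ := adj_lin hA hA A0.
have [f [w [y [Tfw Jwy e]]]] := VN hA hB lT cT (h + (k - c%:C *: h)).
have A0f : A0 f (y + c%:C *: f) by exists y; split => //; exists w; split => //; apply/eX.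
have Hd := lin_sub lJ Hhk (sym _ _ A0f).
have hy : y = - f + (h + (k - c%:C *: h)) by rewrite -e addKr.
have [f2 [w2 [y2 [Tfw2 Jwy2 e2]]]] := VN hA hB lT cT (h - f).
have A0f2 : A0 f2 (y2 + c%:C *: f2) by exists y2; split => //; exists w2; split => //; apply/eX.
have E1 := Hd _ _ A0f2.
have d0 : h - f = 0.
  apply: (ip_eq0 hA); rewrite -{1}e2 (ipDl hA).
  move: E1; rewrite (ipDl hA) (ipZl hA).
  move/(congr1 (fun t => t - c%:C * ipA f2 (h - f))); rewrite addrK => ->.
  rewrite hy !(ipBr hA, ipDr hA, ipNr hA, ipZr hA, ipBl hA, ipDl hA, ipZl hA) conj_real.
  ring.
have hf : h = f by apply/eqP; rewrite -subr_eq0 d0.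
exists y; split; last first.
  by rewrite hy hf addKr subrK.
by exists w; split; [rewrite hf | apply/eX].
Qed.

Lemma IDadj (T : lrel A B) (X : lrel B A) w g x z : releq X (adj ipA ipB T) ->
  X w g -> T x z -> ipB w z = ipA g x.
Proof.
move=> eX /eX H Txz; by rewrite (ipC hB z w) (H _ _ Txz) -(ipC hA).
Qed.

Lemma expand_id (x x' : nat -> A) (y : nat -> B) :
  (forall n m, ipA (x' n) (x m) = c%:C * ipA (x n) (x m) + ipB (y n) (y m)) ->
  forall n m, ipA (x' n - x' m) (x n - x m) =
    c%:C * (nn ipA (x n - x m))%:C + (nn ipB (y n - y m))%:C.
Proof.
move=> H n m; rewrite !(nnE hA) (nnE hB).
rewrite !(ipBl hA, ipBr hA, ipBl hB, ipBr hB) !H; ring.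
Qed.

Lemma cauchy_cv (V : lmodType C) (ip : V -> V -> C) (hV : is_hilbert ip) u phi :
  cv ip u phi -> forall e : R, 0 < e -> exists N, forall n m, (N <= n)%N -> (N <= m)%N ->
  nn ip (u n - u m) < e.
Proof.
move=> hu e e0.
have e4 : 0 < e / 4%:R by apply: divr_gt0 => //; rewrite ltr0n.
have [N hN] := hu _ e4; exists N => n m /hN h1 /hN h2.
have -> : u n - u m = (u n - phi) + (phi - u m) by rewrite addrA subrK.
apply: le_lt_trans (nnD_le hV _ _) _; rewrite (nnB hV phi).
have h4 : e / 4%:R * 4%:R = e by rewrite divfK // pnatr_eq0.
lra.
Qed.

Lemma tapprox_of (A0 : lrel A A) (x x' : nat -> A) (y : nat -> B) phi wp :
  (forall n, A0 (x n) (x' n)) -> cv ipA x phi -> cv ipB y wp ->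
  (forall n m, ipA (x' n) (x m) = c%:C * ipA (x n) (x m) + ipB (y n) (y m)) ->
  tapprox ipA A0 x x' phi.
Proof.
move=> Ax cx cy H; split => //; first exact/(cvg_inE hA).
move=> e e0.
have q0 : 0 < `|c| + 1 by have := normr_ge0 c; lra.
have e2 : 0 < e / 2%:R / (`|c| + 1) by apply: divr_gt0 => //; apply: divr_gt0 => //; rewrite ltr0n.
have e2' : 0 < e / 2%:R by apply: divr_gt0 => //; rewrite ltr0n.
have [N1 h1] := cauchy_cv hA cx e2; have [N2 h2] := cauchy_cv hB cy e2'.
exists (maxn N1 N2) => n m; rewrite !geq_max => /andP[n1 n2] /andP[m1 m2].
have b1 := h1 _ _ n1 m1; have b2 := h2 _ _ n2 m2.
rewrite (expand_id H) ltC_nc.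
apply: le_lt_trans (nc_tri _ _) _.
rewrite ncM !ncC (ger0_norm (nn_ge0 hA _)) (ger0_norm (nn_ge0 hB _)).
have g1 := nn_ge0 hA (x n - x m); have g2 := normr_ge0 c.
have h4 : e / 2%:R / (`|c| + 1) * (`|c| + 1) = e / 2%:R by rewrite divfK // gt_eqF.
have h5 : e / 2%:R * 2%:R = e by rewrite divfK // pnatr_eq0.
move: (nn ipA (x n - x m)) (`|c|) (e / 2%:R / (`|c| + 1)) b1 g1 g2 h4 => a b d b1 g1 g2 h4.
nra.
Qed.

Lemma GC (A0 : lrel A A) (x x' v v' : nat -> A) (y y2 : nat -> B) phi psi wp wq :
  (forall n, A0 (x n) (x' n)) -> (forall n, A0 (v n) (v' n)) ->
  cv ipA x phi -> cv ipA v psi -> cv ipB y wp -> cv ipB y2 wq ->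
  (forall n m, ipA (x' n) (x m) = c%:C * ipA (x n) (x m) + ipB (y n) (y m)) ->
  (forall n m, ipA (v' n) (v m) = c%:C * ipA (v n) (v m) + ipB (y2 n) (y2 m)) ->
  (forall n, ipA (x' n) (v n) = c%:C * ipA (x n) (v n) + ipB (y n) (y2 n)) ->
  tclos ipA A0 phi psi (c%:C * ipA phi psi + ipB wp wq).
Proof.
move=> Ax Av cx cv cy cy2 Hx Hv Hxv.
exists x, x', v, v'; split.
- exact: (tapprox_of Ax cx cy Hx).
- exact: (tapprox_of Av cv cy2 Hv).
- have := cvC_add (cvC_scale (c%:C) (ip_cv hA cx cv)) (ip_cv hB cy cy2).
  by move=> H e /H [N hN]; exists N => n /hN; rewrite Hxv.
Qed.

Lemma tclos_const (A0 : lrel A A) f f' g g' : A0 f f' -> A0 g g' -> tclos ipA A0 f g (ipA f' g).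
Proof.
move=> Af Ag; exists (fun _ => f), (fun _ => f'), (fun _ => g), (fun _ => g'); split.
- split => //; first by apply/(cvg_inE hA); exact: (cv_const hA).
  by move=> e e0; exists 0%N => n m _ _; rewrite !subrr (ip0l hA) normr0 ltcR.
- split => //; first by apply/(cvg_inE hA); exact: (cv_const hA).
  by move=> e e0; exists 0%N => n m _ _; rewrite !subrr (ip0l hA) normr0 ltcR.
- by move=> e e0; exists 0%N => n _; rewrite subrr normr0 ltcR.
Qed.

Lemma tclos_sub (A1 A2 : lrel A A) : relsub A1 A2 -> form_sub (tclos ipA A1) (tclos ipA A2).
Proof.
move=> s phi psi z [u [u' [v [v' [[h1 h2 h3] [k1 k2 k3] H]]]]].
by exists u, u', v, v'; split => //; split => // n; apply: s.
Qed.


Lemma GF1 (T : lrel A B) (X : lrel B A) (u u' : nat -> A) phi : linrel T -> closedrel ipA ipB T ->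
  releq X (adj ipA ipB T) -> tapprox ipA (radd c (rcomp X T)) u u' phi ->
  exists (w : nat -> B) wl, [/\ forall n, T (u n) (w n) /\ X (w n) (u' n - c%:C *: u n),
    cv ipB w wl & rreg ipB T phi wl].
Proof.
move=> lT cT eX [Au cu cau].
have cu' : cv ipA u phi by apply/(cvg_inE hA).
have ex n : exists w, T (u n) w /\ X w (u' n - c%:C *: u n).
  have [g [[w [Tw Xw]] ->]] := Au n; exists w; split => //; by rewrite addrK.
pose w n := proj1_sig (boolp.cid (ex n)).
have Hw n : T (u n) (w n) /\ X (w n) (u' n - c%:C *: u n) by rewrite /w; case: (boolp.cid _).
have Hid : forall n m, ipA (u' n) (u m) = c%:C * ipA (u n) (u m) + ipB (w n) (w m).
  move=> n m; rewrite (IDadj eX (proj2 (Hw n)) (proj1 (Hw m))) (ipBl hA) (ipZl hA); ring.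
have [wl cw] : exists wl, cv ipB w wl.
  apply: (complete hB) => e e0.
  have q0 : 0 < `|c| + 1 by have := normr_ge0 c; lra.
  have e2 : 0 < e / 2%:R / (`|c| + 1) by apply: divr_gt0 => //; apply: divr_gt0 => //; rewrite ltr0n.
  have e2' : 0 < e / 2%:R by apply: divr_gt0 => //; rewrite ltr0n.
  have [N1 h1] := cauchy_cv hA cu' e2; have [N2 h2] := cau _ e2'.
  exists (maxn N1 N2) => n m; rewrite !geq_max => /andP[n1 n2] /andP[m1 m2].
  have b1 := h1 _ _ n1 m1; have b2 := h2 _ _ n2 m2.
  rewrite (expand_id Hid) ltC_nc in b2.
  have t := nc_tri (c%:C * (nn ipA (u n - u m))%:C + (nn ipB (w n - w m))%:C)
     (- (c%:C * (nn ipA (u n - u m))%:C)).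
  rewrite addrC addKr ncN ncM !ncC (ger0_norm (nn_ge0 hA _)) (ger0_norm (nn_ge0 hB _)) in t.
  have g1 := nn_ge0 hA (u n - u m); have g2 := normr_ge0 c.
  have h4 : e / 2%:R / (`|c| + 1) * (`|c| + 1) = e / 2%:R by rewrite divfK // gt_eqF.
  have h5 : e / 2%:R * 2%:R = e by rewrite divfK // pnatr_eq0.
  move: (nn ipA (u n - u m)) (`|c|) (e / 2%:R / (`|c| + 1)) b1 b2 g1 g2 h4 t => a b d b1 b2 g1 g2 h4 t.
  nra.
exists w, wl; split => //.
apply: (rreg_closed hB lT cT (u := u) (v := w)) => // n.
apply: rreg_intro => //; first exact: (proj1 (Hw n)).
move=> m Tm; have := (proj1 (eX _ _) (proj2 (Hw n))).
by move/adj_mul_orth => /(_ hA _ Tm) H; rewrite (ipC hB) H rmorph0.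
Qed.

Lemma GF (T : lrel A B) (X : lrel B A) phi psi z : linrel T -> closedrel ipA ipB T ->
  releq X (adj ipA ipB T) -> tclos ipA (radd c (rcomp X T)) phi psi z ->
  exists wp wq, [/\ rreg ipB T phi wp, rreg ipB T psi wq & z = c%:C * ipA phi psi + ipB wp wq].
Proof.
move=> lT cT eX [u [u' [v [v' [tu tv hz]]]]].
have [w [wl [Hw cw rw]]] := GF1 lT cT eX tu.
have [w2 [wl2 [Hw2 cw2 rw2]]] := GF1 lT cT eX tv.
have cu : cv ipA u phi by case: tu => _ /(cvg_inE hA).
have cv' : cv ipA v psi by case: tv => _ /(cvg_inE hA).
exists wl, wl2; split => //.
have H := cvC_add (cvC_scale (c%:C) (ip_cv hA cu cv')) (ip_cv hB cw cw2).
apply: (cvC_uniq hz); apply: cvC_ext H => n.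
rewrite (IDadj eX (proj2 (Hw n)) (proj1 (Hw2 n))) (ipBl hA) (ipZl hA); ring.
Qed.

End Op.
Lemma releq_sym (A B : Type) (T1 T2 : lrel A B) : releq T1 T2 -> releq T2 T1.
Proof. by move=> e f g; split => /e. Qed.

Lemma releq_refl (A B : Type) (T : lrel A B) : releq T T.
Proof. by []. Qed.

Theorem lemma7p2 (R : realType)
  (Hs : lmodType R[i]) (ipH : Hs -> Hs -> R[i]) (hH : is_hilbert ipH)
  (Kc : lmodType R[i]) (ipK : Kc -> Kc -> R[i]) (hK : is_hilbert ipK)
  (S : lrel Hs Hs) (hS : linrel S) (gamma : R) (hgamma : lower_bound ipH S gamma)
  (c : R) (hc : c <= gamma)
  (Q : lrel Hs Kc) (hQ : representing_map ipH ipK S c Q)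
  (H : lrel Hs Hs) :
  let J := companion S c Q in
  ([/\ selfadjoint ipH H, relsub S H, bounded_below_by ipH H c,
       form_sub (tclos ipH (friedrichs ipH ipK c Q)) (tclos ipH H)
     & form_sub (tclos ipH H) (tclos ipH (krein ipH ipK c J))])
  <->
  (exists Rc : lrel Hs Kc,
     [/\ operator Rc, relsub Q Rc, relsub Rc (rreg ipK (adj ipK ipH J))
       & releq H (radd c (rcomp (adj ipH ipK Rc) (adj ipK ipH (adj ipH ipK Rc))))]).
Proof.
move=> J.
have [[lQ mQ] domQ rep] := hQ.
set TJ := adj ipK ipH J.
have lTJ : linrel TJ := adj_lin hK hH J.
have cTJ : closedrel ipH ipK TJ := @adj_closed _ _ _ _ _ hK hH J.
have JQ : forall phi q, Q phi q -> TJ phi q.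
  move=> phi q Qq q' x [psi [psi' [Spsi Qpsi ->]]].
  have [phi' Sphi] : rdom S phi by apply/domQ; exists q.
  by rewrite (ipBl hH) (ipZl hH) (rep _ _ _ _ _ Spsi Qpsi Qq); ring.
have Qorth : forall phi q m, Q phi q -> rmul TJ m -> ipK q m = 0.
  move=> phi q m Qq Tm.
  have [phi' Sphi] : rdom S phi by apply/domQ; exists q.
  have := Tm q (phi' - c%:C *: phi); rewrite (ip0r hH) => <- //.
  by exists phi, phi'.
have QregJ : forall phi q, Q phi q -> rreg ipK TJ phi q.
  move=> phi q Qq; apply: rreg_intro; [exact: lTJ | exact: JQ Qq | move=> m; exact: Qorth Qq].
have eK : releq (adj ipH ipK TJ) (adj ipH ipK TJ) := releq_refl _.
split.
- case=> sa SH bb fF fK.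
  have lH : linrel H := linrel_releq (releq_sym sa) (adj_lin hH hH H).
  pose Rc f r := (exists f', H f f') /\ rreg ipK TJ f r.
  have lRJ := rreg_lin hK lTJ.
  have opR : operator Rc.
    have [RJ0 RJD RJZ] := lRJ; have [H0 HD HZ] := lH.
    split; first split.
    + by split => //; exists 0.
    + move=> f g f' g' [[h1 H1] r1] [[h2 H2] r2]; split; last exact: RJD.
      by exists (h1 + h2); apply: HD.
    + move=> a f g [[h1 H1] r1]; split; last exact: RJZ.
      by exists (a *: h1); apply: HZ.
    + by move=> g [_ r]; exact: (rreg_mul0 hK lTJ r).
  exists Rc; split => //.
  + move=> phi q Qq; split; last exact: QregJ.
    have [phi' Sphi] : rdom S phi by apply/domQ; exists q.
    by exists phi'; apply: SH.
  + by move=> f r [].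
  + set TR := adj ipK ipH (adj ipH ipK Rc).
    have eXR : releq (adj ipH ipK Rc) (adj ipH ipK TR) := releq_sym (adj3 hH hK Rc).
    have HA : relsub H (radd c (rcomp (adj ipH ipK Rc) TR)).
      move=> f f' Hf.
      have [wf [_ [rf _ _]]] := GF hH hK lTJ cTJ eK (fK _ _ _ (tclos_const hH Hf Hf)).
      have Rf : Rc f wf by split; [exists f' | done].
      exists (f' - c%:C *: f); split; last by rewrite subrK.
      exists wf; split; first exact: (sub_adj2 hH hK).
      move=> g r [[g' Hg] rg].
      have [wa [wb [ra rb ez]]] := GF hH hK lTJ cTJ eK (fK _ _ _ (tclos_const hH Hf Hg)).
      rewrite -(rreg_uniq hK lTJ ra rf) -(rreg_uniq hK lTJ rb rg).
      rewrite (ipC hK wa wb) (ipBr hH) (ipZr hH) conj_real.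
      have -> : ipK wa wb = ipH f' g - c%:C * ipH f g by rewrite ez; ring.
      by rewrite rmorphB rmorphM /= conj_real -!(ipC hH).
    move=> f g; split; first exact: HA.
    move=> Af; apply/sa.
    have s1 := SYM hH hK (c:=c) eXR Af.
    by move=> x y Hxy; apply: s1; apply: HA.
- case=> Rc [opR QR RR eH].
  have [lR mR] := opR.
  set TR := adj ipK ipH (adj ipH ipK Rc).
  set XR := adj ipH ipK Rc.
  set AR := radd c (rcomp XR TR).
  have eXR : releq XR (adj ipH ipK TR) := releq_sym (adj3 hH hK Rc).
  have lTR : linrel TR := adj_lin hK hH _.
  have cTR : closedrel ipH ipK TR := @adj_closed _ _ _ _ _ hK hH _.
  have symA := SYM hH hK (c:=c) eXR.
  have saA := SA hH hK (c:=c) lTR cTR eXR.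
  have SH : relsub S H.
    move=> phi phi' Sphi; apply/eH.
    have [q Qq] : rdom Q phi by apply/domQ; exists phi'.
    have Rq := QR _ _ Qq.
    exists (phi' - c%:C *: phi); split; last by rewrite subrK.
    exists q; split; first exact: (sub_adj2 hH hK).
    move=> f r Rfr; have [g [p [TJg Tp -> _]]] := RR _ _ Rfr.
    have e1 := TJg q (phi' - c%:C *: phi) (ex_intro _ phi (ex_intro _ phi' (And3 Sphi Qq erefl))).
    rewrite (ipBl hK) (ipC hK q p) (Qorth _ _ _ Qq Tp) rmorph0 subr0.
    by rewrite (ipC hK q g) -e1 -(ipC hH).
  split => //.
  + move=> f g; split.
    * move=> /eH Af; have := symA _ _ Af.
      by move=> Hf x y /eH Axy; apply: Hf.
    * move=> Hfg; apply/eH; apply: saA => x y Axy; apply: Hfg; exact/eH.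
  + move=> f k /eH [y [[w [Tw Xw]] ->]].
    have e1 := (proj1 (eXR _ _) Xw) _ _ Tw.
    rewrite (ipDl hH) (ipZl hH) addrC lerDl (ipC hH f y) -e1 (ipxx hK) conj_real.
    by rewrite ler0c nn_ge0.
  + move=> phi psi z.
    set TF := adj ipK ipH (adj ipH ipK Q).
    have eXF : releq (adj ipH ipK Q) (adj ipH ipK TF) := releq_sym (adj3 hH hK Q).
    have lTF : linrel TF := adj_lin hK hH _.
    have cTF : closedrel ipH ipK TF := @adj_closed _ _ _ _ _ hK hH _.
    move=> /(GF hH hK lTF cTF eXF) [wp [wq [rp rq ->]]].
    have [x [y [Qxy cx cy]]] := CL hH hK lQ (rreg_sub lTF rp).
    have [v [y2 [Qvy cvv cy2]]] := CL hH hK lQ (rreg_sub lTF rq).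
    have ex n : exists x', S (x n) x' by apply/domQ; exists (y n).
    have ev n : exists v', S (v n) v' by apply/domQ; exists (y2 n).
    pose x' n := proj1_sig (boolp.cid (ex n)).
    pose v' n := proj1_sig (boolp.cid (ev n)).
    have Sx n : S (x n) (x' n) by rewrite /x'; case: (boolp.cid _).
    have Sv n : S (v n) (v' n) by rewrite /v'; case: (boolp.cid _).
    apply: (GC hH hK (x := x) (x' := x') (v := v) (v' := v') (y := y) (y2 := y2)) => //.
    * by move=> n; apply: SH.
    * by move=> n; apply: SH.
    * by move=> n m; exact: rep _ _ _ _ _ (Sx n) (Qxy n) (Qxy m).
    * by move=> n m; exact: rep _ _ _ _ _ (Sv n) (Qvy n) (Qvy m).
    * by move=> n; exact: rep _ _ _ _ _ (Sx n) (Qxy n) (Qvy n).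
  + move=> phi psi z /(tclos_sub (fun f g => proj1 (eH f g))).
    move=> /(GF hH hK lTR cTR eXR) [wp [wq [rp rq ->]]].
    have toJ : forall phi w, rreg ipK TR phi w -> rreg ipK TJ phi w.
      move=> ph w rw.
      have [x [y [Rxy cx cy]]] := CL hH hK lR (rreg_sub lTR rw).
      apply: rreg_intro => //.
        apply: (cTJ x y) => // n; apply: (rreg_sub lTJ); exact: RR.
      move=> m Tm; apply: (orth_lim hK cy) => n.
      exact: (rreg_orth (RR _ _ (Rxy n)) Tm).
    have [x [y [Hxy cx cy]]] := CORE hH hK lTJ cTJ (toJ _ _ rp).
    have [v [y2 [Hvy cvv cy2]]] := CORE hH hK lTJ cTJ (toJ _ _ rq).
    pose k n := proj1_sig (boolp.cid (proj2 (Hxy n))).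
    pose k2 n := proj1_sig (boolp.cid (proj2 (Hvy n))).
    have Hk n : adj ipH ipK TJ (y n) (k n) by rewrite /k; case: (boolp.cid _).
    have Hk2 n : adj ipH ipK TJ (y2 n) (k2 n) by rewrite /k2; case: (boolp.cid _).
    have id1 : forall (a1 a2 : nat -> Hs) (b1 b2 : nat -> Kc) (k' : nat -> Hs) n m,
        adj ipH ipK TJ (b1 n) (k' n) -> TJ (a2 m) (b2 m) ->
        ipH (k' n + c%:C *: a1 n) (a2 m) = c%:C * ipH (a1 n) (a2 m) + ipK (b1 n) (b2 m).
      move=> a1 a2 b1 b2 k' n m H1 H2.
      by rewrite (ipDl hH) (ipZl hH) (IDadj hH hK eK H1 H2) addrC.
    apply: (GC hH hK (x := x) (v := v) (x' := fun n => k n + c%:C *: x n)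
                     (v' := fun n => k2 n + c%:C *: v n) (y := y) (y2 := y2)) => //.
    * by move=> n; exists (k n); split => //; exists (y n); split => //; case: (Hxy n).
    * by move=> n; exists (k2 n); split => //; exists (y2 n); split => //; case: (Hvy n).
    * by move=> n m; exact: (id1 x x y y k n m (Hk n) (proj1 (Hxy m))).
    * by move=> n m; exact: (id1 v v y2 y2 k2 n m (Hk2 n) (proj1 (Hvy m))).
    * by move=> n; exact: (id1 x v y y2 k n n (Hk n) (proj1 (Hvy n))).
Qed.
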